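(* Let $X$, $Y$ be $d$-dimensional normal pseudomanifolds such that $Y$ is obtained from $X$ by starring a new vertex in a facet of $X$. Then $Y$ is a stacked $d$-sphere if and only if $X$ is a stacked $d$-sphere.
   Context: A simplicial complex is a finite set of finite sets closed under taking subsets; an element of size $i+1$ is an $i$-face (the empty set is the unique $(-1)$-face). A pure $d$-dimensional complex has all maximal faces (facets) of dimension $d$. The link of a face $\alpha$ is $\mathrm{lk}_X(\alpha)=\{\beta\in X:\beta\cap\alpha=\emptyset,\ \alpha\cup\beta\in X\}$. A $d$-dimensional normal pseudomanifold ($d\ge1$) is a pure $d$-dimensional simplicial complex in which every $(d-1)$-face lies in exactly two facets and the link of every face of dimension $\le d-2$ (including the empty face) is connected. If $\sigma$ is a facet of a pure $d$-dimensional complex $X$ and $v\notin V(X)$, starring $v$ in $\sigma$ gives the complex whose facets are the facets of $X$ other than $\sigma$ together with the sets $\tau\cup\{v\}$ for the $(d-1)$-faces $\tau\subset\sigma$. The standard $d$-sphere $S^d_{d+2}$ is the complex of all proper subsets of a $(d+2)$-set; a stacked $d$-sphere is a complex obtained from $S^d_{d+2}$ by finitely many starrings. *)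

(* Defs.v *)
From HB Require Import structures.
From mathcomp Require Import all_boot.
From mathcomp Require Import finmap.
Set Implicit Arguments. Unset Strict Implicit. Unset Printing Implicit Defensive.
Local Open Scope fset_scope.

Notation cplx := {fset {fset nat}}.

Definition is_complex (X : cplx) : Prop :=
  forall s t : {fset nat}, s \in X -> t `<=` s -> t \in X.

Definition verts (X : cplx) : {fset nat} := \bigcup_(s <- X) s.

Definition is_facet (X : cplx) (s : {fset nat}) : bool :=
  (s \in X) && all (fun t : {fset nat} => ~~ (s `<` t)) X.

Definition facets (X : cplx) : cplx := [fset s in X | is_facet X s].

(* pure d-dimensional: nonempty of dimension d, all facets of dimension d
   (an i-face has i+1 elements) *)
Definition pure (d : nat) (X : cplx) : Prop :=
  is_complex X /\ (exists s, s \in X /\ #|` s| = d.+1) /\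
  (forall s, is_facet X s -> #|` s| = d.+1).

Definition link (X : cplx) (a : {fset nat}) : cplx :=
  [fset b in X | fdisjoint b a && ((a `|` b) \in X)].

Definition adj (X : cplx) : rel nat := fun x y => [fset x; y] \in X.

Definition connected (X : cplx) : Prop :=
  verts X != fset0 /\
  forall u w, u \in verts X -> w \in verts X ->
    exists p : seq nat, path (adj X) u p /\ last u p = w.

Definition normal_pseudomanifold (d : nat) (X : cplx) : Prop :=
  1 <= d /\ pure d X /\
  (forall t, t \in X -> #|` t| = d ->
      #|` [fset s in X | is_facet X s && (t `<=` s)]| = 2) /\
  (forall a, a \in X -> #|` a| <= d - 1 -> connected (link X a)).

Definition gen (F : cplx) : cplx := \bigcup_(s <- F) fpowerset s.

Definition star (d : nat) (X : cplx) (sg : {fset nat}) (v : nat) : cplx :=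
  gen ((facets X `\ sg) `|`
       [fset t `|` [fset v] | t in [fset t in fpowerset sg | #|` t| == d]]).

Definition starred (d : nat) (X Y : cplx) : Prop :=
  exists sg v, is_facet X sg /\ v \notin verts X /\ Y = star d X sg v.

Definition std_sphere (A : {fset nat}) : cplx := fpowerset A `\ A.

Inductive stacked_sphere (d : nat) : cplx -> Prop :=
| stacked_base A : #|` A| = d.+2 -> stacked_sphere d (std_sphere A)
| stacked_step X sg v : stacked_sphere d X -> is_facet X sg ->
    v \notin verts X -> stacked_sphere d (star d X sg v).

(* Main.v *)
Require Import Defs.
From mathcomp Require Import all_boot finmap.
From mathcomp Require Import zify.
Set Implicit Arguments. Unset Strict Implicit. Unset Printing Implicit Defensive.
Local Open Scope fset_scope.

Lemma sub_eq_card (A B : {fset nat}) : A `<=` B -> (#|` B| <= #|` A|)%N -> A = B.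
Proof. by move=> h1 h2; apply/eqP; rewrite eqEfcard h1 h2. Qed.

Lemma card_D1 (f : {fset nat}) a : a \in f -> #|` f `\ a| = (#|` f| - 1)%N.
Proof. move=> h; rewrite (cardfsD1 a f) h /=; lia. Qed.

Lemma ridge_eq (r f : {fset nat}) : r `<=` f -> #|` r|.+1 = #|` f| ->
  exists2 b, b \in f & r = f `\ b.
Proof.
move=> rf hc.
have : #|` f `\` r| == 1 by rewrite cardfsDS //; apply/eqP; lia.
case/cardfs1P=> b hb.
have bf : b \in f `\` r by rewrite hb inE.
move: (bf); rewrite inE => /andP[br bf'].
exists b => //.
apply: sub_eq_card.
  apply/fsubsetP=> x xr; rewrite !inE (fsubsetP rf _ xr) andbT.
  by apply/eqP=> e; subst; rewrite xr in br.
rewrite card_D1 //; lia.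
Qed.

Lemma two_elems (S : {fset nat}) a b c : #|` S| = 2 -> a \in S -> b \in S -> c \in S ->
  a != b -> c = a \/ c = b.
Proof.
move=> hS aS bS cS ab.
have e : [fset a; b] = S.
  apply: sub_eq_card; last by rewrite cardfs2 ab hS.
  by apply/fsubsetP=> x; rewrite !inE => /orP[] /eqP ->.
by move: cS; rewrite -e !inE => /orP[] /eqP ->; [left|right].
Qed.

Lemma neq_card_I (f g : {fset nat}) n : #|` f| = n -> #|` g| = n -> f != g ->
  (#|` f `&` g| < n)%N.
Proof.
move=> hf hg fg; rewrite ltnNge; apply/negP=> h.
have e : f `&` g = f by apply: sub_eq_card; [exact: fsubsetIl| lia].
have : f = g by apply: sub_eq_card; [rewrite -e fsubsetIr|lia].
by move/eqP; rewrite (negbTE fg).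
Qed.

Definition Tf (s : {fset nat}) (v : nat) : {fset {fset nat}} :=
  [fset (s `\ a `|` [fset v]) | a in s].

Lemma TfP (s : {fset nat}) (v : nat) t : reflect (exists2 a, a \in s & t = s `\ a `|` [fset v]) (t \in Tf s v).
Proof. by apply: (iffP (imfsetP _ _ _ _)) => [[a h e]|[a h e]]; exists a. Qed.

Lemma Tf_in (s : {fset nat}) (v a : nat) : a \in s -> s `\ a `|` [fset v] \in Tf s v.
Proof. by move=> h; apply/TfP; exists a. Qed.

Lemma memT (s : {fset nat}) a v x : (x \in s `\ a `|` [fset v]) = ((x != a) && (x \in s)) || (x == v).
Proof. by rewrite !inE. Qed.

Lemma T_v (s : {fset nat}) (a v : nat) : v \in s `\ a `|` [fset v].
Proof. by rewrite memT eqxx orbT. Qed.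

Lemma T_card (s : {fset nat}) a v : a \in s -> v \notin s ->
  #|` s `\ a `|` [fset v]| = #|` s|.
Proof.
move=> ha hv; rewrite fsetUC cardfsU1 inE negb_and hv orbT card_D1 //.
have : (0 < #|` s|)%N by rewrite cardfs_gt0; apply/eqP=> e; rewrite e inE in ha.
simpl; lia.
Qed.

Lemma T_inj (s : {fset nat}) a b v : a \in s -> b \in s -> v \notin s ->
  s `\ a `|` [fset v] = s `\ b `|` [fset v] -> a = b.
Proof.
move=> ha hb hv e; apply/eqP/negPn/negP=> ab.
have : a \in s `\ b `|` [fset v] by rewrite memT ha ab.
rewrite -e memT eqxx /= => /eqP ea; by rewrite -ea ha in hv.
Qed.

Lemma T_sub (s : {fset nat}) a v : s `\ a `<=` s `\ a `|` [fset v].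
Proof. exact: fsubsetUl. Qed.

Lemma T_minus (s : {fset nat}) a v : v \notin s -> (s `\ a `|` [fset v]) `\ v = s `\ a.
Proof.
move=> hv; apply/fsetP=> x; rewrite !inE; case: (x =P v) => [->|]; last by rewrite orbF.
by rewrite (negbTE hv) !andbF.
Qed.

Definition starf (F : cplx) (s : {fset nat}) (v : nat) : cplx := (F `\ s) `|` Tf s v.

Lemma starfE (F : cplx) s v t : (t \in starf F s v) = ((t != s) && (t \in F)) || (t \in Tf s v).
Proof. by rewrite !inE. Qed.

Definition unif d (F : cplx) := forall f, f \in F -> #|` f| = d.+1.
Definition vfree (F : cplx) (v : nat) := forall f, f \in F -> v \notin f.
Definition PMe d (F : cplx) := forall f r, f \in F -> r `<=` f -> #|` r| = d ->
  exists2 g, g \in F & (g != f) && (r `<=` g).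
Definition PMu d (F : cplx) := forall f g h r, f \in F -> g \in F -> h \in F ->
  r `<=` f -> r `<=` g -> r `<=` h -> #|` r| = d -> f != g -> (h == f) || (h == g).
Definition closedF d (F K : cplx) := forall f g, f \in K -> g \in F ->
  (d <= #|` f `&` g|)%N -> g \in K.
Definition Conn d (F : cplx) := forall K, K `<=` F -> K != fset0 -> closedF d F K -> K = F.

Inductive fstacked (d : nat) : cplx -> Prop :=
| fbase A : #|` A| = d.+2 -> fstacked d [fset A `\ a | a in A]
| fstep G s v : fstacked d G -> s \in G -> vfree G v -> fstacked d (starf G s v).

Lemma Tf_v (s : {fset nat}) v t : t \in Tf s v -> v \in t.
Proof. by case/TfP=> a _ ->; apply: T_v. Qed.

Lemma Tr_eq (s : {fset nat}) a v (r : {fset nat}) : v \notin s -> a \in s ->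
  r `<=` s `\ a `|` [fset v] -> v \notin r -> #|` r|.+1 = #|` s| -> r = s `\ a.
Proof.
move=> vs aS rt vr hc; apply: sub_eq_card; last by rewrite card_D1 //; lia.
apply/fsubsetP=> x xr; move: (fsubsetP rt _ xr); rewrite memT => /orP[h|/eqP e]; first by rewrite !inE.
by subst; rewrite xr in vr.
Qed.

Lemma unif_starf d F s v : unif d F -> s \in F -> vfree F v -> unif d (starf F s v).
Proof.
move=> hu sF vf t; rewrite starfE => /orP[/andP[_ tF]|/TfP[a aS ->]]; first exact: hu.
by rewrite T_card ?hu ?vf.
Qed.

Lemma PMe_starf d F s v : unif d F -> PMe d F -> s \in F -> vfree F v -> PMe d (starf F s v).
Proof.
move=> hu hp sF vf; have vs := vf s sF.
move=> f r; rewrite starfE => /orP[/andP[fs fF]|/TfP[a aS ->]] rf hr.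
- case: (hp f r fF rf hr) => g gF /andP[gf rg].
  case: (g =P s) => [gs|/eqP gs].
  + subst g; have hc : #|` r|.+1 = #|` s| by rewrite hr hu.
    have [a aS ra] := ridge_eq rg hc.
    exists (s `\ a `|` [fset v]); first by rewrite starfE Tf_in ?orbT.
    apply/andP; split; last by rewrite ra T_sub.
    by apply/eqP=> e; move: (vf f fF); rewrite -e T_v.
  + by exists g; rewrite ?starfE ?gs ?gF ?gf ?rg.
- have hc : #|` r|.+1 = #|` s `\ a `|` [fset v]| by rewrite T_card // hr hu.
  have [b bf rb] := ridge_eq rf hc.
  case: (b =P v) => [bv|/eqP bv].
  + subst b; rewrite T_minus // in rb; subst r.
    case: (hp s (s `\ a) sF (fsubsetDl _ _) hr) => g gF /andP[gs rg].
    exists g; first by rewrite starfE gs gF.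
    rewrite rg andbT; apply/eqP=> e; move: (vf g gF); by rewrite e T_v.
  + move: (bf); rewrite memT (negbTE bv) orbF => /andP[ba bS].
    exists (s `\ b `|` [fset v]); first by rewrite starfE Tf_in ?orbT.
    apply/andP; split.
      by apply/eqP=> /T_inj => /(_ bS aS vs) e; rewrite e eqxx in ba.
    rewrite rb; apply/fsubsetP=> x; rewrite !inE.
    case/andP=> xb /orP[/andP[_ ->]|->]; by rewrite ?xb ?orbT.
Qed.

Lemma two_card (s r : {fset nat}) d v : #|` s| = d.+1 -> (1 <= d)%N -> v \in r ->
  #|` r| = d -> r `\ v `<=` s -> #|` s `\` (r `\ v)| = 2.
Proof. move=> hs hd vr hr rs; rewrite cardfsDS // card_D1 //; lia. Qed.

Lemma PMu_starf d F s v : (1 <= d)%N -> unif d F -> PMu d F -> s \in F -> vfree F v ->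
  PMu d (starf F s v).
Proof.
move=> hd hu hp sF vf; have vs := vf s sF.
move=> f g h r fH gH hH rf rg rh hr fg.
case: (boolP (v \in r)) => vr.
- have inT : forall t, t \in starf F s v -> r `<=` t -> t \in Tf s v.
    move=> t; rewrite starfE => /orP[/andP[_ tF] rt|//].
    by move: (vf t tF); rewrite (fsubsetP rt _ vr).
  move: (inT f fH rf) (inT g gH rg) (inT h hH rh) => /TfP[a aS ef] /TfP[b bS eg] /TfP[c cS eh].
  have key : forall e, e \in s -> r `<=` s `\ e `|` [fset v] -> e \in s `\` (r `\ v).
    move=> e eS re; rewrite !inE eS andbT; apply/negP => /andP[ev er].
    by move: (fsubsetP re _ er); rewrite !inE eqxx /= (negbTE ev).
  have rs : r `\ v `<=` s.
    apply/fsubsetP=> x; rewrite !inE => /andP[xv xr].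
    move: (fsubsetP rf _ xr); rewrite ef !inE (negbTE xv) orbF; by case/andP.
  have ab : a != b by apply/eqP=> e; subst; rewrite eqxx in fg.
  have ka : a \in s `\` (r `\ v) by apply: key => //; rewrite -ef.
  have kb : b \in s `\` (r `\ v) by apply: key => //; rewrite -eg.
  have kc : c \in s `\` (r `\ v) by apply: key => //; rewrite -eh.
  by case: (two_elems (two_card (hu s sF) hd vr hr rs) ka kb kc ab) => e;
    rewrite eh ef eg e eqxx ?orbT.
- have hs := hu s sF.
  have Tr : forall t, t \in Tf s v -> r `<=` t -> exists2 a, a \in s & t = s `\ a `|` [fset v] /\ r = s `\ a.
    move=> t /TfP[a aS ->] rt; exists a => //; split => //.
    by apply: (@Tr_eq s a v) => //; rewrite hr hs.
  have Tuniq : forall t t', t \in Tf s v -> t' \in Tf s v -> r `<=` t -> r `<=` t' -> t = t'.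
    move=> t t' tT t'T rt rt'; case: (Tr t tT rt) => a aS [-> ra].
    case: (Tr t' t'T rt') => b bS [-> rb]; congr (_ `|` _).
    by rewrite -ra -rb.
  have TrS : forall t, t \in Tf s v -> r `<=` t -> r `<=` s.
    by move=> t tT rt; case: (Tr t tT rt) => a aS [_ ->]; apply: fsubsetDl.
  move: fH gH hH; rewrite !starfE.
  case/orP=> [/andP[fs fF]|fT]; case/orP=> [/andP[gs gF]|gT]; case/orP=> [/andP[hs' hF]|hT].
  + exact: (hp f g h r).
  + have := hp f g s r fF gF sF rf rg (TrS h hT rh) hr fg.
    by rewrite eq_sym (negbTE fs) eq_sym (negbTE gs).
  + have := hp f s h r fF sF hF rf (TrS g gT rg) rh hr fs.
    by rewrite (negbTE hs') orbF => ->.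
  + by rewrite (Tuniq h g hT gT rh rg) eqxx orbT.
  + have sg : s != g by rewrite eq_sym.
    have := hp s g h r sF gF hF (TrS f fT rf) rg rh hr sg.
    by rewrite (negbTE hs') /= => ->; rewrite orbT.
  + by rewrite (Tuniq h f hT fT rh rf) eqxx.
  + by rewrite (Tuniq f g fT gT rf rg) eqxx in fg.
  + by rewrite (Tuniq h f hT fT rh rf) eqxx.
Qed.

Lemma Tf_all_close d (K : cplx) (s : {fset nat}) v : #|` s| = d.+1 -> v \notin s ->
  (forall f g, f \in K -> g \in Tf s v -> (d <= #|` f `&` g|)%N -> g \in K) ->
  (exists2 t, t \in K & t \in Tf s v) -> {subset Tf s v <= K}.
Proof.
move=> hs vs hcl [t tK /TfP[a aS et]] u /TfP[b bS eu].
case: (a =P b) => [ab|/eqP ab]; first by rewrite eu -ab -et.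
apply: (hcl t u tK); first by rewrite eu Tf_in.
have sub : u `\ a `<=` t `&` u.
  apply/fsubsetP=> x; rewrite eu et !inE.
  by case/andP=> xa /orP[/andP[xb xS]|->]; rewrite ?xa ?xS ?xb ?orbT.
apply: leq_trans (fsubset_leq_card sub).
have au : a \in u by rewrite eu !inE ab aS.
by rewrite card_D1 // eu T_card // hs; lia.
Qed.

Lemma cap_ridge (f s : {fset nat}) d : #|` f| = d.+1 -> #|` s| = d.+1 -> f != s ->
  (d <= #|` f `&` s|)%N -> exists2 a, a \in s & f `&` s = s `\ a.
Proof.
move=> hf hs fs hc; apply: ridge_eq; first exact: fsubsetIr.
have := neq_card_I hf hs fs; lia.
Qed.

Lemma Conn_starf d F s v : unif d F -> Conn d F -> s \in F -> vfree F v ->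
  Conn d (starf F s v).
Proof.
move=> hu hc sF vf; have vs := vf s sF; have hs := hu s sF.
move=> K KH Kn hcl.
have sH : s \notin starf F s v by rewrite starfE eqxx /=; apply/negP=> /Tf_v; rewrite (negbTE vs).
set KT := (K `&` Tf s v) != fset0.
have TK : KT -> {subset Tf s v <= K}.
  move=> hKT; apply: (Tf_all_close hs vs).
    by move=> f g fK gT; apply: hcl => //; rewrite starfE gT orbT.
  case: (fset_0Vmem (K `&` Tf s v)) => [e|[t]]; first by rewrite /KT e eqxx in hKT.
  by rewrite inE => /andP[tK tT]; exists t.
pose K0 := [fset x in F | (x \in K) || ((x == s) && KT)].
have K0E : forall x, (x \in K0) = (x \in F) && ((x \in K) || ((x == s) && KT)).
  by move=> x; rewrite /K0 !inE.
have KF : forall x, x \in K -> x \in F -> x != s.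
  by move=> x xK xF; apply/eqP=> e; subst; rewrite (fsubsetP KH _ xK) in sH.
have KTI : forall t, t \in K -> t \in Tf s v -> KT.
  move=> t tK tT; apply/eqP=> e; have : t \in K `&` Tf s v by rewrite inE tK tT.
  by rewrite e inE.
have e0 : K0 = F.
  apply: hc.
  - by apply/fsubsetP=> x; rewrite K0E; case/andP.
  - case: (fset_0Vmem K) => [e|[k kK]]; first by rewrite e eqxx in Kn.
    have kH := fsubsetP KH _ kK.
    have : k \in K0 \/ s \in K0.
      move: kH; rewrite starfE => /orP[/andP[ks kF]|kT].
        by left; rewrite K0E kF kK.
      by right; rewrite K0E sF eqxx (KTI k kK kT) orbT.
    by case=> h; apply/eqP=> e; move: h; rewrite e inE.
  - move=> f g; rewrite K0E => /andP[fF /orP[fK|/andP[/eqP fs hKT]]] gF hfg.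
    + case: (g =P s) => [gs|/eqP gs].
      * subst g; have [a aS ea] := cap_ridge (hu f fF) hs (KF f fK fF) hfg.
        have tK : s `\ a `|` [fset v] \in K.
          apply: (hcl f) => //; first by rewrite starfE Tf_in ?orbT.
          apply: leq_trans hfg _; apply: fsubset_leq_card.
          apply/fsubsetP=> x xfs; have := xfs; rewrite ea => xa.
          rewrite inE (fsubsetP (T_sub _ _ _) _ xa) andbT.
          by move: xfs; rewrite inE; case/andP.
        by rewrite K0E sF eqxx (KTI _ tK (Tf_in _ aS)) orbT.
      * by rewrite K0E gF (hcl f g) // starfE gs gF.
    + subst f; case: (g =P s) => [->|/eqP gs]; first by rewrite K0E sF eqxx hKT orbT.
      have hgs : (d <= #|` g `&` s|)%N by rewrite fsetIC.
      have [b bS eb] := cap_ridge (hu g gF) hs gs hgs.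
      have tK := TK hKT _ (Tf_in v bS).
      rewrite K0E gF (hcl _ g tK) //; first by rewrite starfE gs gF.
      apply: leq_trans hfg _; apply: fsubset_leq_card.
      apply/fsubsetP=> x; rewrite inE => /andP[xs xg].
      have : x \in g `&` s by rewrite inE xs xg.
      by rewrite eb => xb; rewrite inE xg (fsubsetP (T_sub _ _ _) _ xb).
apply/fsetP=> x; apply/idP/idP; first by move/(fsubsetP KH).
rewrite starfE => /orP[/andP[xs xF]|xT].
- by move: xF; rewrite -e0 K0E (negbTE xs) /= orbF => /andP[].
- have : s \in K0 by rewrite e0.
  rewrite K0E => /andP[_ /orP[sK|/andP[_ hKT]]].
    by rewrite (fsubsetP KH _ sK) in sH.
  exact: TK.
Qed.

Lemma baseP (A : {fset nat}) t : reflect (exists2 a, a \in A & t = A `\ a) (t \in [fset A `\ a | a in A]).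
Proof. by apply: (iffP (imfsetP _ _ _ _)) => [[a h e]|[a h e]]; exists a. Qed.

Lemma base_in (A : {fset nat}) a : a \in A -> A `\ a \in [fset A `\ a | a in A].
Proof. by move=> h; apply/baseP; exists a. Qed.

Lemma base_inv d (A : {fset nat}) : (1 <= d)%N -> #|` A| = d.+2 ->
  let G := [fset A `\ a | a in A] in [/\ unif d G, PMe d G, PMu d G & Conn d G].
Proof.
move=> hd hA G; split.
- by move=> f /baseP[a aA ->]; rewrite card_D1 // hA.
- move=> f r /baseP[a aA ->] rf hr.
  have ar : a \in A `\` r by rewrite !inE aA andbT; apply/negP=> /(fsubsetP rf); rewrite !inE eqxx.
  have : #|` (A `\` r) `\ a| == 1.
    by rewrite card_D1 // cardfsDS ?hA ?hr; [apply/eqP; lia| apply: fsubset_trans rf (fsubsetDl _ _)].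
  case/cardfs1P=> b eb; have : b \in (A `\` r) `\ a by rewrite eb inE.
  rewrite !inE => /andP[ba /andP[br bA]].
  exists (A `\ b); first exact: base_in.
  apply/andP; split.
    apply/eqP=> e; have : a \in A `\ b by rewrite !inE aA eq_sym ba.
    by rewrite e !inE eqxx.
  apply/fsubsetP=> x xr; rewrite !inE (fsubsetP (fsubset_trans rf (fsubsetDl _ _)) _ xr) andbT.
  by apply/eqP=> e; subst; rewrite xr in br.
- move=> f g h r /baseP[a aA ->] /baseP[b bA ->] /baseP[c cA ->] rf rg rh hr fg.
  have ab : a != b by apply/eqP=> e; subst; rewrite eqxx in fg.
  have key : forall e, e \in A -> r `<=` A `\ e -> e \in A `\` r.
    by move=> e eA re; rewrite !inE eA andbT; apply/negP=> /(fsubsetP re); rewrite !inE eqxx.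
  have h2 : #|` A `\` r| = 2 by rewrite cardfsDS ?hA ?hr; [lia| apply: fsubset_trans rf (fsubsetDl _ _)].
  by case: (two_elems h2 (key a aA rf) (key b bA rg) (key c cA rh) ab) => ->; rewrite eqxx ?orbT.
- move=> K KG Kn hcl; apply/eqP; rewrite eqEfsubset KG /=.
  case: (fset_0Vmem K) => [e|[k kK]]; first by rewrite e eqxx in Kn.
  move: (fsubsetP KG _ kK) => /baseP[a aA ek].
  apply/fsubsetP=> g gG; move: (gG) => /baseP[b bA eg].
  case: (a =P b) => [ab|/eqP ab]; first by rewrite eg -ab -ek.
  apply: (hcl k) => //.
  have sub : (A `\ a) `\ b `<=` k `&` g.
    apply/fsubsetP=> x; rewrite ek eg !inE.
    by case/andP=> xb /andP[xa xA]; rewrite xa xb xA.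
  apply: leq_trans (fsubset_leq_card sub).
  have bA' : b \in A `\ a by rewrite !inE bA eq_sym ab.
  rewrite card_D1 // card_D1 // hA; lia.
Qed.

Lemma fst_inv d G : (1 <= d)%N -> fstacked d G -> [/\ unif d G, PMe d G, PMu d G & Conn d G].
Proof.
move=> hd; elim=> [A hA|G' s v _ [hu he hp hc] sG vf].
  exact: base_inv.
split; [exact: unif_starf|exact: PMe_starf|exact: PMu_starf|exact: Conn_starf].
Qed.

Lemma other_elem (s : {fset nat}) x : (2 <= #|` s|)%N -> exists2 b, b \in s & b != x.
Proof.
move=> h; case: (fset_0Vmem (s `\ x)) => [e|[b]].
  have E := cardfsD1 x s; rewrite e cardfs0 in E; rewrite E in h.
  by case: (x \in s) h.
by rewrite !inE => /andP[bx bs]; exists b.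
Qed.

Lemma fsetD1U (w : {fset nat}) a u : a != u -> (w `|` [fset u]) `\ a = w `\ a `|` [fset u].
Proof.
move=> au; apply/fsetP=> x; rewrite !inE.
case: (x =P u) => [->|_]; first by rewrite eq_sym au.
by rewrite !orbF.
Qed.

Lemma sphere_base (w : {fset nat}) u : u \notin w ->
  [fset w] `|` Tf w u = [fset (w `|` [fset u]) `\ a | a in w `|` [fset u]].
Proof.
move=> uw; apply/fsetP=> t; apply/idP/idP.
- rewrite in_fsetU in_fset1 => /orP[/eqP->|/TfP[a aw ->]].
    apply/baseP; exists u; first by rewrite !inE eqxx orbT.
    by rewrite fsetUC fsetU1K.
  apply/baseP; exists a; first by rewrite in_fsetU aw.
  by rewrite fsetD1U //; apply/eqP=> e; subst; rewrite aw in uw.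
- case/baseP=> a; rewrite in_fsetU => /orP[aw|]; last rewrite in_fset1.
    rewrite fsetD1U => [->|]; first by rewrite in_fsetU Tf_in ?orbT.
    by apply/eqP=> e; subst; rewrite aw in uw.
  by move/eqP => -> ->; rewrite fsetUC fsetU1K // in_fsetU in_fset1 eqxx.
Qed.

Lemma card_U1 (w : {fset nat}) u : u \notin w -> #|` w `|` [fset u]| = #|` w|.+1.
Proof. by move=> uw; rewrite fsetUC cardfsU1 uw. Qed.

Lemma sphere_closed d (G : cplx) (w : {fset nat}) v : unif d G -> PMu d G -> Conn d G ->
  v \notin w -> #|` w| = d.+1 -> w \in G -> {subset Tf w v <= G} ->
  G = [fset w] `|` Tf w v.
Proof.
move=> hu hp hc vw hw wG TG.
pose K := [fset w] `|` Tf w v.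
have KE : forall x, (x \in K) = (x == w) || (x \in Tf w v) by move=> x; rewrite !inE.
have KG : K `<=` G by apply/fsubsetP=> x; rewrite KE => /orP[/eqP->|/TG].
have other : forall f b, f \in K -> b \in f -> exists2 f', f' \in K & (f' != f) && (f `\ b `<=` f').
  move=> f b; rewrite KE => /orP[/eqP->|/TfP[a aw ->]] bf.
  - exists (w `\ b `|` [fset v]); first by rewrite KE Tf_in ?orbT.
    rewrite T_sub andbT; apply/eqP=> e; by move: (T_v w b v); rewrite e (negbTE vw).
  - case: (b =P v) => [bv|/eqP bv].
      subst b; exists w; first by rewrite KE eqxx.
      rewrite T_minus // fsubsetDl andbT; apply/eqP=> e; by move: (T_v w a v); rewrite -e (negbTE vw).
    move: (bf); rewrite memT (negbTE bv) orbF => /andP[ba bw].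
    exists (w `\ b `|` [fset v]); first by rewrite KE Tf_in ?orbT.
    apply/andP; split.
      by apply/eqP=> /T_inj => /(_ bw aw vw) e; rewrite e eqxx in ba.
    apply/fsubsetP=> x; rewrite !inE.
    case/andP=> xb /orP[/andP[_ ->]|->]; by rewrite ?xb ?orbT.
have uK : forall x, x \in K -> #|` x| = d.+1 by move=> x /(fsubsetP KG); apply: hu.
have wK : w \in K by rewrite KE eqxx.
apply/esym; apply: hc => //.
  by apply/eqP=> e; move: wK; rewrite /K e inE.
move=> f g fK gG hfg.
case: (f =P g) => [<-//|/eqP fg].
have [b bg eb] := cap_ridge (uK f fK) (hu g gG) fg hfg.
have hr : #|` f `&` g|.+1 = #|` f|.
  by rewrite eb card_D1 // hu // uK //; lia.
have [c cf ec] := ridge_eq (fsubsetIl f g) hr.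
case: (other f c fK cf) => f' f'K /andP[f'f sub].
have rf' : f `&` g `<=` f' by rewrite ec.
have hrc : #|` f `&` g| = d by apply: succn_inj; rewrite hr (uK f fK).
have ff' : f != f' by rewrite eq_sym.
have := hp f f' g (f `&` g) (fsubsetP KG _ fK) (fsubsetP KG _ f'K) gG (fsubsetIl _ _) rf' (fsubsetIr _ _) hrc ff'.
by case/orP=> /eqP->.
Qed.

Lemma starf_nv (F : cplx) (s : {fset nat}) (v : nat) (x : {fset nat}) : v \notin x -> (x \in starf F s v) = (x != s) && (x \in F).
Proof.
move=> vx; rewrite starfE; case: (boolP (x \in Tf s v)) => [/Tf_v|]; last by rewrite orbF.
by rewrite (negbTE vx).
Qed.

Lemma starf_v (F : cplx) (s : {fset nat}) (v : nat) (x : {fset nat}) : vfree F v -> v \in x -> (x \in starf F s v) = (x \in Tf s v).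
Proof.
move=> vf vx; rewrite starfE; case: (boolP (x \in F)) => xF; last by rewrite andbF.
by move: (vf x xF); rewrite vx.
Qed.

Lemma T_sub_s (F G : cplx) (s s' : {fset nat}) (v : nat) : starf F s v = starf G s' v -> vfree F v -> vfree G v ->
  v \notin s -> (2 <= #|` s|)%N -> s `<=` s'.
Proof.
move=> e vF vG vs hs; apply/fsubsetP=> x xs.
have [b bs bx] := other_elem x hs.
have : s `\ b `|` [fset v] \in starf G s' v by rewrite -e starfE Tf_in ?orbT.
rewrite starf_v ?T_v // => /TfP[c cs' ec].
have : x \in s `\ b `|` [fset v] by rewrite !inE xs eq_sym bx.
rewrite ec !inE => /orP[/andP[_ //]|/eqP xv]; by subst; rewrite xs in vs.
Qed.

Lemma starf_inj d (F G : cplx) (s s' : {fset nat}) (v : nat) : (1 <= d)%N -> unif d F -> unif d G ->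
  starf F s v = starf G s' v -> vfree F v -> vfree G v -> s \in F -> s' \in G -> F = G.
Proof.
move=> hd uF uG e vF vG sF s'G.
have ss : s = s'.
  apply/eqP; rewrite eqEfsubset; apply/andP; split.
    by apply: (T_sub_s e) => //; [apply: vF | rewrite uF //; lia].
  by apply: (T_sub_s (esym e)) => //; [apply: vG | rewrite uG //; lia].
subst s'; apply/fsetP=> x.
case: (x =P s) => [->|/eqP xs]; first by rewrite sF s'G.
case: (boolP (x \in F)) => xF.
  have : x \in starf F s v by rewrite starfE xs xF.
  by rewrite e starf_nv ?vF // xs.
case: (boolP (x \in G)) => // xG.
have : x \in starf G s v by rewrite starfE xs xG.
by rewrite -e starf_nv ?vG // xs (negbTE xF).
Qed.

Lemma Tf_pair (a b u : nat) t : a != b ->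
  (t \in Tf [fset a; b] u) = (t == [fset b; u]) || (t == [fset a; u]).
Proof.
move=> ab.
have ea : [fset a; b] `\ a = [fset b].
  apply/fsetP=> x; rewrite !inE; case: (x =P a) => [->|/eqP xa].
    by rewrite (negbTE ab).
  by [].
have eb : [fset a; b] `\ b = [fset a].
  apply/fsetP=> x; rewrite !inE; case: (x =P b) => [->|/eqP xb].
    by rewrite eq_sym (negbTE ab).
  by rewrite orbF.
apply/TfP/idP.
- case=> c; rewrite !inE => /orP[]/eqP -> ->; by rewrite ?ea ?eb eqxx ?orbT.
- case/orP=> /eqP ->; [exists a; last by rewrite ea| exists b; last by rewrite eb];
  by rewrite !inE eqxx ?orbT.
Qed.

Lemma pair_eqS (s : {fset nat}) a b : #|` s| = 2 -> a \in s -> b \in s -> a != b ->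
  s = [fset a; b].
Proof.
move=> hs ha hb ab; apply/esym/sub_eq_card; last by rewrite hs cardfs2 ab.
by apply/fsubsetP=> x; rewrite !inE => /orP[]/eqP->.
Qed.

Lemma main_base d (A : {fset nat}) (F : cplx) s v : (1 <= d)%N -> #|` A| = d.+2 ->
  unif d F -> s \in F -> vfree F v -> (exists2 g, g \in F & g != s) ->
  starf F s v = [fset A `\ a | a in A] -> False.
Proof.
move=> hd hA hu sF vf [g gF gs] eH.
have vs := vf s sF; have hs := hu s sF.
have h2 : (2 <= #|` s|)%N by rewrite hs; lia.
have sub : forall t, t \in starf F s v -> t `<=` A.
  by move=> t; rewrite eH => /baseP[a _ ->]; apply: fsubsetDl.
have [a1 a1s _] := other_elem v h2.
have vA : v \in A.
  by apply: (fsubsetP (sub _ _) v (T_v s a1 v)); rewrite starfE Tf_in ?orbT.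
have gH : g \in starf F s v by rewrite starfE gs gF.
have gA : g = A `\ v.
  move: gH; rewrite eH => /baseP[a0 _ e]; rewrite e; case: (a0 =P v) => [->//|/eqP a0v].
  by move: (vf _ gF); rewrite e !inE vA eq_sym a0v.
have sg : s `<=` g.
  apply/fsubsetP=> x xs; have [b bs bx] := other_elem x h2.
  have xt : x \in s `\ b `|` [fset v] by rewrite !inE xs eq_sym bx.
  have bH : s `\ b `|` [fset v] \in starf F s v by rewrite starfE Tf_in ?orbT.
  have xA := fsubsetP (sub _ bH) _ xt.
  rewrite gA !inE xA andbT; apply/eqP=> e; subst; by rewrite xs in vs.
have : s = g by apply: sub_eq_card => //; rewrite hu // hs.
by move/eqP; rewrite eq_sym (negbTE gs).
Qed.

Definition IHtype d (G' : cplx) := forall (F : cplx) s v, unif d F -> s \in F -> vfree F v ->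
  (exists2 g, g \in F & g != s) -> starf F s v = G' -> fstacked d F.

Lemma claimA d (G' : cplx) (w : {fset nat}) v : (1 <= d)%N -> fstacked d G' -> IHtype d G' ->
  v \notin w -> #|` w| = d.+1 -> {subset Tf w v <= G'} ->
  (forall x, x \in G' -> v \in x -> x \in Tf w v) -> w \notin G' ->
  fstacked d ((G' `\` Tf w v) `|` [fset w]).
Proof.
move=> hd stG IH vw hw TG Gv wG.
have [hu' he' hp' hc'] := fst_inv hd stG.
set Z := (G' `\` Tf w v) `|` [fset w].
have ZE : forall x, (x \in Z) = ((x \notin Tf w v) && (x \in G')) || (x == w).
  by move=> x; rewrite /Z !inE.
apply: (IH Z w v).
- by move=> x; rewrite ZE => /orP[/andP[_ /hu'] //|/eqP->].
- by rewrite ZE eqxx orbT.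
- move=> x; rewrite ZE => /orP[/andP[xT xG]|/eqP->//].
  by apply/negP=> vx; rewrite (Gv x xG vx) in xT.
- have h2 : (2 <= #|` w|)%N by rewrite hw; lia.
  have [a aw _] := other_elem v h2.
  have fG := TG _ (Tf_in v aw).
  have hr : #|` w `\ a| = d by rewrite card_D1 // hw; lia.
  case: (he' _ (w `\ a) fG (T_sub _ _ _) hr) => g gG /andP[gf rg].
  exists g.
    rewrite ZE gG andbT; apply/orP; left; apply/negP=> /TfP[b bw eg].
    case: (a =P b) => [ab|/eqP ab]; first by subst; rewrite eqxx in gf.
    have : b \in w `\ a by rewrite !inE bw eq_sym ab.
    move/(fsubsetP rg); rewrite eg !inE eqxx /= => /eqP e; subst; by rewrite bw in vw.
  by apply/eqP=> e; subst; rewrite gG in wG.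
- apply/fsetP=> x; rewrite starfE ZE.
  case: (boolP (x \in Tf w v)) => [/TG -> //|xT]; first by rewrite orbT.
  rewrite orbF /=; case: (x =P w) => [->|_]; last by rewrite orbF.
  by rewrite (negbTE wG).
Qed.

Lemma claimRen d (G' : cplx) (w : {fset nat}) v v' : (1 <= d)%N -> fstacked d G' -> IHtype d G' ->
  vfree G' v' -> v \notin w -> v' \notin w -> #|` w| = d.+1 -> {subset Tf w v <= G'} ->
  (forall x, x \in G' -> v \in x -> x \in Tf w v) ->
  fstacked d ((G' `\` Tf w v) `|` Tf w v').
Proof.
move=> hd stG IH vf' vw v'w hw TG Gv.
have [hu' he' hp' hc'] := fst_inv hd stG.
case: (boolP (w \in G')) => wG.
  have eG := sphere_closed hu' hp' hc' vw hw wG TG.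
  have -> : (G' `\` Tf w v) `|` Tf w v' = [fset w] `|` Tf w v'.
    apply/fsetP=> x; rewrite eG !inE.
    case: (x =P w) => [->|_] /=; last by rewrite andNb.
    by rewrite andbT; apply/orP; left; apply/negP=> /Tf_v; rewrite (negbTE vw).
  rewrite sphere_base //; apply: fbase; by rewrite card_U1 // hw.
have stZ := claimA hd stG IH vw hw TG Gv wG.
have := fstep stZ (_ : w \in _) (_ : vfree _ v').
have -> : starf ((G' `\` Tf w v) `|` [fset w]) w v' = (G' `\` Tf w v) `|` Tf w v'.
  apply/fsetP=> x; rewrite starfE !inE.
  case: (x =P w) => [->|_] /=; last by rewrite orbF.
  by rewrite (negbTE wG) andbF.
apply.
  by rewrite !inE eqxx orbT.
move=> x; rewrite !inE => /orP[/andP[_ /vf' //]|/eqP->//].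
Qed.

Lemma main_step d (G' : cplx) s' v' (F : cplx) s v : (1 <= d)%N -> fstacked d G' ->
  s' \in G' -> vfree G' v' -> IHtype d G' ->
  unif d F -> s \in F -> vfree F v -> starf F s v = starf G' s' v' -> fstacked d F.
Proof.
move=> hd stG s'G vf' IH hu sF vf eH.
have [hu' he' hp' hc'] := fst_inv hd stG.
have vs := vf s sF; have hs := hu s sF; have vs' := vf' s' s'G; have hs' := hu' s' s'G.
have h2 : (2 <= #|` s|)%N by rewrite hs; lia.
have h2' : (2 <= #|` s'|)%N by rewrite hs'; lia.
case: (v =P v') => [ev|/eqP nv].
  by subst v'; rewrite (starf_inj hd hu hu' eH vf vf' sF s'G).
have THs : forall a, a \in s -> s `\ a `|` [fset v] \in starf G' s' v'.
  by move=> a aS; rewrite -eH starfE Tf_in ?orbT.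
have FH : forall x, x \in F -> x != s -> x \in starf G' s' v'.
  by move=> x xF xs; rewrite -eH starfE xs xF.
have HF : forall x, v \notin x -> x \in starf G' s' v' -> x \in F.
  by move=> x vx; rewrite -eH starf_nv // => /andP[].
case: (boolP (v \in s')) => vs'v.
- have v's : v' \in s.
    have [c cs' cv] := other_elem v h2'.
    have vt : v \in s' `\ c `|` [fset v'] by rewrite !inE vs'v eq_sym cv.
    have tH : s' `\ c `|` [fset v'] \in starf G' s' v' by rewrite starfE Tf_in ?orbT.
    move: tH; rewrite -eH (starf_v _ vf vt) => /TfP[a aS ea].
    have := T_v s' c v'; rewrite ea !inE (eq_sym v' v) (negbTE nv) orbF; by case/andP.
  pose f1 := s `\ v' `|` [fset v].
  have f1H : f1 \in starf G' s' v' := THs v' v's.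
  have v'f1 : v' \notin f1 by rewrite !inE eqxx /= eq_sym.
  move: (f1H); rewrite (starf_nv _ _ v'f1) => /andP[f1s' f1G].
  have Gv1 : forall x, x \in G' -> v \in x -> x = s' \/ x = f1.
    move=> x xG vx; case: (x =P s') => [->|/eqP xs']; [by left|right].
    have : x \in starf G' s' v' by rewrite starfE xs' xG.
    rewrite -eH (starf_v _ vf vx) => /TfP[a aS ex].
    case: (a =P v') => [ea|/eqP av']; first by rewrite ex ea.
    by have := vf' _ xG; rewrite ex !inE v's eq_sym av'.
  have hf1 : #|` f1| = d.+1 := hu' _ f1G.
  have vf1 : v \in f1 by apply: T_v.
  case: (leqP 2 d) => hd2.
    have cl : forall b, b \in f1 -> b != v -> f1 `\ b `<=` s'.
      move=> b bf bv; have hr : #|` f1 `\ b| = d by rewrite card_D1 // hf1 subn1.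
      case: (he' f1 (f1 `\ b) f1G (fsubsetDl _ _) hr) => g gG /andP[gf rg].
      have vg : v \in g by apply: (fsubsetP rg); apply/fsetD1P; split => //; rewrite eq_sym.
      by case: (Gv1 g gG vg) => e; [rewrite -e | rewrite e eqxx in gf].
    have sub : f1 `<=` s'.
      apply/fsubsetP=> x xf.
      have h2v : (2 <= #|` f1 `\ v|)%N by rewrite card_D1 // hf1 subn1.
      have [b bf bx] := other_elem x h2v; case/fsetD1P: bf => bv bf1.
      by apply: (fsubsetP (cl b bf1 bv)); apply/fsetD1P; split => //; rewrite eq_sym.
    have : f1 = s' by apply: sub_eq_card => //; rewrite hs' hf1.
    by move/eqP; rewrite (negbTE f1s').
  have d1 : d = 1 by apply/eqP; rewrite eqn_leq -ltnS hd2 hd.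
  subst d.
  have nTv : forall w x, v \notin x -> x \notin Tf w v.
    by move=> w x vx; apply/negP=> /Tf_v; rewrite (negbTE vx).
  have [x xs xv'] := other_elem v' h2.
  have es := pair_eqS hs xs v's xv'.
  have [y ys' yv] := other_elem v h2'.
  have es' := pair_eqS hs' ys' vs'v yv.
  have xv : x != v by apply/eqP=> e; subst; rewrite xs in vs.
  have yv' : y != v' by apply/eqP=> e; subst; rewrite ys' in vs'.
  have ef1 : f1 = [fset x; v].
    apply/fsetP=> z; rewrite /f1 es !inE.
    case: (z =P v') => [->|_]; last by rewrite orbF.
    by rewrite (eq_sym v' x) (negbTE xv') (eq_sym v' v) (negbTE nv).
  have xy : x != y by apply/eqP=> e; move: f1s'; rewrite ef1 es' e eqxx.
  pose w := [fset x; y].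
  have vw : v \notin w by rewrite !inE negb_or !(eq_sym v) xv yv.
  have v'w : v' \notin w by rewrite !inE negb_or !(eq_sym v') xv' yv'.
  have hw : #|` w| = 2 by rewrite cardfs2 xy.
  have TG : {subset Tf w v <= G'}.
    by move=> t; rewrite Tf_pair // => /orP[]/eqP->; [rewrite -es'|rewrite -ef1].
  have Gv : forall z, z \in G' -> v \in z -> z \in Tf w v.
    move=> z zG vz; rewrite Tf_pair //.
    by case: (Gv1 z zG vz) => ->; rewrite ?es' ?ef1 eqxx ?orbT.
  have R := claimRen (isT : (1 <= 1)%N) stG IH vf' vw v'w hw TG Gv.
  suff -> : F = (G' `\` Tf w v) `|` Tf w v' by [].
  apply/fsetP=> z; apply/idP/idP.
  - move=> zF; case: (z =P s) => [->|/eqP zs].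
      by rewrite in_fsetU Tf_pair // es eqxx !orbT.
    have := FH z zF zs; rewrite starfE => /orP[/andP[zs' zG]|zT'].
      by rewrite in_fsetU in_fsetD zG nTv ?vf.
    move: zT'; rewrite es' Tf_pair // => /orP[]/eqP ez.
      by move: (vf z zF); rewrite ez !inE eqxx.
    by rewrite in_fsetU Tf_pair // ez eqxx !orbT.
  - rewrite in_fsetU in_fsetD => /orP[/andP[zT zG]|zT'].
      have vz : v \notin z by apply/negP=> vz; rewrite (Gv z zG vz) in zT.
      apply: (HF z vz); rewrite starfE zG andbT; apply/orP; left.
      by apply/eqP=> e; subst; rewrite vs'v in vz.
    move: zT'; rewrite Tf_pair // => /orP[]/eqP ez; last by rewrite ez -es.
    have vz : v \notin z by rewrite ez !inE negb_or (eq_sym v y) yv.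
    by apply: (HF z vz); rewrite starfE es' Tf_pair // ez eqxx !orbT.
- have v's : v' \notin s.
    apply/negP=> v's; have [a aS av'] := other_elem v' h2.
    have vt : v' \in s `\ a `|` [fset v] by rewrite !inE v's eq_sym av'.
    have := THs a aS; rewrite (starf_v _ vf' vt) => /TfP[c cs' ec].
    have := T_v s a v; rewrite ec !inE (negbTE nv) orbF => /andP[_ vs'2].
    by rewrite vs'2 in vs'v.
  have TG : {subset Tf s v <= G'}.
    move=> t /TfP[a aS et]; have := THs a aS; rewrite -et starfE => /orP[/andP[_ //]|/TfP[c _ ec]].
    have := T_v s' c v'; rewrite -ec et !inE (negbTE v's) andbF /= eq_sym.
    by rewrite (negbTE nv).
  have Gv : forall x, x \in G' -> v \in x -> x \in Tf s v.
    move=> x xG vx; have xs' : x != s' by apply/eqP=> e; subst; rewrite vx in vs'v.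
    have : x \in starf G' s' v' by rewrite starfE xs' xG.
    by rewrite -eH starf_v.
  have T'nv : forall x, x \in Tf s' v' -> v \notin x.
    move=> x /TfP[c _ ->]; rewrite !inE negb_or (negbTE vs'v) andbF /=; exact: nv.
  have nTv : forall x, v \notin x -> x \notin Tf s v.
    by move=> x vx; apply/negP=> /Tf_v; rewrite (negbTE vx).
  case: (s =P s') => [ss|/eqP nss].
  + subst s'; have R := claimRen hd stG IH vf' vs v's hs TG Gv.
    suff -> : F = (G' `\` Tf s v) `|` Tf s v' by [].
    apply/fsetP=> x; apply/idP/idP.
    * move=> xF; case: (x =P s) => [->|/eqP xs].
        by rewrite in_fsetU in_fsetD s'G andbT nTv.
      have := FH x xF xs; rewrite starfE => /orP[/andP[_ xG]|xT].
        by rewrite in_fsetU in_fsetD xG andbT nTv ?vf.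
      by rewrite in_fsetU xT orbT.
    * rewrite in_fsetU in_fsetD => /orP[/andP[xT xG]|xT'].
        case: (x =P s) => [->//|/eqP xs].
        have vx : v \notin x by apply/negP=> vx; rewrite (Gv x xG vx) in xT.
        by apply: (HF x vx); rewrite starfE xs xG.
      by apply: (HF x (T'nv x xT')); rewrite starfE xT' orbT.
  + have sG : s \notin G'.
      apply/negP=> sG; have : s \in starf G' s' v' by rewrite starfE nss sG.
      rewrite -eH starfE eqxx /= => /Tf_v; by rewrite (negbTE vs).
    have stZ := claimA hd stG IH vs hs TG Gv sG.
    have ZE : forall x, (x \in (G' `\` Tf s v) `|` [fset s]) = ((x \notin Tf s v) && (x \in G')) || (x == s).
      by move=> x; rewrite !inE.
    have s'Z : s' \in (G' `\` Tf s v) `|` [fset s] by rewrite ZE s'G nTv.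
    have vZ : vfree ((G' `\` Tf s v) `|` [fset s]) v'.
      by move=> x; rewrite ZE => /orP[/andP[_ /vf'] //|/eqP->].
    suff -> : F = starf ((G' `\` Tf s v) `|` [fset s]) s' v' by apply: fstep.
    apply/fsetP=> x; apply/idP/idP.
    * move=> xF; case: (x =P s) => [->|/eqP xs].
        by rewrite starfE ZE eqxx orbT andbT nss.
      have := FH x xF xs; rewrite starfE => /orP[/andP[xs' xG]|xT]; rewrite starfE.
        by rewrite ZE xs' xG nTv ?vf.
      by rewrite xT orbT.
    * rewrite starfE ZE => /orP[/andP[xs' /orP[/andP[xT xG]|/eqP->//]]|xT'].
        have vx : v \notin x by apply/negP=> vx; rewrite (Gv x xG vx) in xT.
        by apply: (HF x vx); rewrite starfE xs' xG.
      by apply: (HF x (T'nv x xT')); rewrite starfE xT' orbT.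
Qed.

Lemma genP (F : cplx) (t : {fset nat}) : reflect (exists2 f, f \in F & t `<=` f) (t \in gen F).
Proof.
apply: (iffP (bigfcupP _ _ _ _)) => [[f /andP[fF _] tf]|[f fF tf]].
  by exists f => //; rewrite -fpowersetE.
by exists f; rewrite ?fF ?fpowersetE.
Qed.

Lemma vertsP (X : cplx) (u : nat) : reflect (exists2 f, f \in X & u \in f) (u \in verts X).
Proof.
apply: (iffP (bigfcupP _ _ _ _)) => [[f /andP[fF _] tf]|[f fF tf]]; first by exists f.
by exists f; rewrite ?fF.
Qed.

Lemma is_facetP (X : cplx) f : reflect (f \in X /\ forall t, t \in X -> ~~ (f `<` t)) (is_facet X f).
Proof. by apply: (iffP andP) => [[h /allP a]|[h a]]; split => //; apply/allP. Qed.

Lemma facet_gen d (F : cplx) f : unif d F -> is_facet (gen F) f = (f \in F).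
Proof.
move=> hu; apply/is_facetP/idP.
  case=> /genP[g gF fg] hmax; have := hmax g (introT (genP _ _) (ex_intro2 _ _ g gF (fsubset_refl g))).
  by rewrite fproperEneq fg andbT negbK => /eqP->.
move=> fF; split; first by apply/genP; exists f.
move=> t /genP[g gF tg]; apply/negP=> ft.
have h1 := fproper_ltn_card ft; have h2 := fsubset_leq_card tg.
rewrite (hu f fF) in h1; rewrite (hu g gF) in h2.
by have := leq_trans h1 h2; rewrite ltnn.
Qed.

Lemma facets_gen d (F : cplx) : unif d F -> facets (gen F) = F.
Proof.
move=> hu; apply/fsetP=> f; rewrite /facets !inE (facet_gen _ hu).
case: (boolP (f \in F)) => fF; rewrite ?andbF // andbT; apply/genP; exists f => //.
Qed.

Lemma facet_above (X : cplx) s : s \in X -> exists2 f, is_facet X f & s `<=` f.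
Proof.
move=> sX.
have : (#|` [fset t in X | s `<` t]| <= #|` X|)%N by apply: fsubset_leq_card; apply/fsubsetP=> t; rewrite !inE => /andP[].
move: #|` X| => n; elim: n s sX => [|n IHn] s sX hc.
  have e : [fset t in X | s `<` t] = fset0 by apply: cardfs0_eq; apply/eqP; rewrite -leqn0.
  exists s => //; apply/is_facetP; split => // t tX; apply/negP=> st.
  have : t \in [fset t in X | s `<` t] by rewrite !inE tX st.
  by rewrite e inE.
case: (boolP (is_facet X s)) => fs; first by exists s.
have : ~~ all (fun t => ~~ (s `<` t)) X by move: fs; rewrite /is_facet sX.
case/allPn=> t tX; rewrite negbK => st.
have [f ff tf] : exists2 f, is_facet X f & t `<=` f.
  apply: (IHn t tX).
  have sub : [fset u in X | t `<` u] `<` [fset u in X | s `<` u].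
    rewrite fproperEneq; apply/andP; split.
      apply/eqP=> e; have : t \in [fset u in X | s `<` u] by rewrite !inE tX st.
      by rewrite -e !inE (negbTE (fproper_irrefl _)) andbF.
    apply/fsubsetP=> u; rewrite !inE => /andP[uX tu]; rewrite uX.
    exact: fproper_sub_trans st (fproper_sub tu).
  by have h := fproper_ltn_card sub; rewrite -ltnS (leq_trans h hc).
by exists f => //; apply: fsubset_trans (fproper_sub st) tf.
Qed.

Lemma gen_facets (X : cplx) : is_complex X -> gen (facets X) = X.
Proof.
move=> hX; apply/fsetP=> t; apply/genP/idP.
  case=> f; rewrite /facets !inE => /andP[fX _] tf; exact: hX fX tf.
move=> tX; have [f ff tf] := facet_above tX.
by exists f => //; rewrite /facets !inE ff andbT; case/andP: ff.
Qed.

Lemma Tf_star d (sg : {fset nat}) v : #|` sg| = d.+1 ->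
  [fset t `|` [fset v] | t in [fset t in fpowerset sg | #|` t| == d]] = Tf sg v.
Proof.
move=> hs; apply/fsetP=> u; apply/idP/idP.
  case/imfsetP=> t; rewrite /= !inE fpowersetE => /andP[ts /eqP ht] ->.
  have hc : #|` t|.+1 = #|` sg| by rewrite ht hs.
  have [b bs ->] := ridge_eq ts hc.
  by apply/TfP; exists b.
case/TfP=> a aS ->; apply/imfsetP; exists (sg `\ a) => //.
by rewrite /= !inE fpowersetE fsubsetDl card_D1 // hs subn1 eqxx.
Qed.

Lemma star_gen d (F : cplx) s v : unif d F -> s \in F -> star d (gen F) s v = gen (starf F s v).
Proof. by move=> hu sF; rewrite /star (facets_gen hu) (Tf_star _ (hu s sF)). Qed.

Lemma std_gen (A : {fset nat}) : A != fset0 -> std_sphere A = gen [fset A `\ a | a in A].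
Proof.
move=> An; apply/fsetP=> t; rewrite /std_sphere !inE fpowersetE; apply/idP/genP.
  case/andP=> tA tsub.
  case: (fset_0Vmem (A `\` t)) => [e|[a]].
    have At : A `<=` t by rewrite -fsetD_eq0 e.
    have : t == A by rewrite eqEfsubset tsub At.
    by rewrite (negbTE tA).
  rewrite !inE => /andP[at_ aA]; exists (A `\ a); first exact: base_in.
  apply/fsubsetP=> x xt; rewrite !inE (fsubsetP tsub _ xt) andbT.
  by apply/eqP=> e; subst; rewrite xt in at_.
case=> f /baseP[b bA ->] tf; apply/andP; split; last exact: fsubset_trans tf (fsubsetDl _ _).
apply/eqP=> e; subst t; have := fsubsetP tf _ bA; by rewrite !inE eqxx.
Qed.


Lemma verts_vfree (F : cplx) v : v \notin verts (gen F) -> vfree F v.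
Proof.
move=> h f fF; apply/negP=> vf; move/negP: h; apply; apply/vertsP; exists f => //.
by apply/genP; exists f.
Qed.

Lemma vfree_verts' (F : cplx) v : vfree F v -> v \notin verts (gen F).
Proof.
move=> h; apply/negP=> /vertsP[t /genP[f fF tf] vt].
by move: (h f fF); rewrite (fsubsetP tf _ vt).
Qed.

Lemma stacked_f d Y : (1 <= d)%N -> stacked_sphere d Y -> exists2 G, fstacked d G & Y = gen G.
Proof.
move=> hd; elim=> [A hA| X sg v _ [G stG ->] fsg vX].
  exists [fset A `\ a | a in A]; first exact: fbase.
  by apply: std_gen; rewrite -cardfs_gt0 hA.
have [hu _ _ _] := fst_inv hd stG.
have sG : sg \in G by rewrite -(facet_gen _ hu).
exists (starf G sg v); first by apply: fstep => //; apply: verts_vfree.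
by rewrite star_gen.
Qed.

Lemma f_stacked d G : (1 <= d)%N -> fstacked d G -> stacked_sphere d (gen G).
Proof.
move=> hd; elim=> [A hA| G' s v stG IHG sG vf].
  rewrite -std_gen; first exact: stacked_base.
  by rewrite -cardfs_gt0 hA.
have [hu _ _ _] := fst_inv hd stG.
rewrite -(star_gen _ hu sG); apply: stacked_step => //; first by rewrite (facet_gen _ hu).
exact: vfree_verts'.
Qed.

Lemma main_f d : (1 <= d)%N -> forall G, fstacked d G -> forall (F : cplx) s v,
  unif d F -> s \in F -> vfree F v -> (exists2 g, g \in F & g != s) -> starf F s v = G ->
  fstacked d F.
Proof.
move=> hd G; elim=> [A hA|G' s' v' stG IHG s'G vf'] F s v hu sF vf ns eH.
  by case: (main_base hd hA hu sF vf ns eH).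
by apply: (main_step hd stG s'G vf' _ hu sF vf eH); exact: IHG.
Qed.

Theorem lemma4p6 (d : nat) (X Y : {fset {fset nat}}) :
  normal_pseudomanifold d X -> normal_pseudomanifold d Y -> starred d X Y ->
  (stacked_sphere d Y <-> stacked_sphere d X).
Proof.
move=> [hd [[cX [_ pX]] [pmX _]]] _ [sg [v [fsg [vX eY]]]].
split; last by move=> sX; rewrite eY; apply: stacked_step.
move=> sY.
have hu : unif d (facets X) by move=> f; rewrite /facets !inE => /andP[_ /pX].
have eX : X = gen (facets X) by rewrite gen_facets.
have sgX : sg \in X by case/andP: fsg.
have sgF : sg \in facets X by rewrite /facets !inE fsg sgX.
have vf : vfree (facets X) v by apply: verts_vfree; rewrite -eX.
have hs := hu sg sgF.
case: (stacked_f hd sY) => G stG eG.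
have [huG _ _ _] := fst_inv hd stG.
have eS : star d X sg v = gen (starf (facets X) sg v) by rewrite -(star_gen _ hu sgF) -eX.
have eGs : G = starf (facets X) sg v.
  rewrite -(facets_gen huG) -eG eY eS (facets_gen (d := d)) //; exact: unif_starf.
have ns : exists2 g, g \in facets X & g != sg.
  have h2 : (2 <= #|` sg|)%N by rewrite hs ltnS.
  have [a aS _] := other_elem v h2.
  have tX : sg `\ a \in X by apply: (cX sg) => //; apply: fsubsetDl.
  have ht : #|` sg `\ a| = d by rewrite card_D1 // hs subn1.
  have := pmX _ tX ht.
  set S := [fset s in X | is_facet X s && (sg `\ a `<=` s)] => hS.
  case: (fset_0Vmem (S `\ sg)) => [e|[g]].
    have sub : S `<=` [fset sg].
      apply/fsubsetP=> x xS; rewrite inE; apply/negPn/negP=> xs.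
      have : x \in S `\ sg by apply/fsetD1P; split.
      by rewrite e inE.
    by have := fsubset_leq_card sub; rewrite hS cardfs1.
  rewrite !inE => /andP[gs /andP[gX /andP[fg _]]].
  by exists g => //; rewrite /facets !inE gX fg.
rewrite eX; apply: f_stacked => //.
exact: (main_f hd stG hu sgF vf ns (esym eGs)).
Qed.
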